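(* Let $m\ge2$ be an integer, let $x_0,\dots,x_N\in[0,1]$ be distinct nodes, and let $$G(x)=\frac{\operatorname{sign}x}{2}\left(\frac{e^x-e^{-x}}{2}-\sum_{k=1}^{m-1}\frac{x^{2k-1}}{(2k-1)!}\right).$$ Let $M$ be the $(N+1)\times(N+1)$ matrix $M=(G(x_\beta-x_\gamma))_{\beta,\gamma=0}^N$ and let $S$ be the $m\times(N+1)$ matrix whose rows are $(x_0^{\alpha},\dots,x_N^{\alpha})$ for $\alpha=0,1,\dots,m-2$ and, as last row, $(e^{-x_0},\dots,e^{-x_N})$. If $S$ has a right inverse, then the $(N+1+m)\times(N+1+m)$ matrix $$Q=\begin{pmatrix}M&S^*\\ S&0\end{pmatrix}$$ is nonsingular, where $S^*$ denotes the transpose of $S$.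
   Context: $Q$ is the matrix of the linear system $\sum_\gamma\overline C_\gamma G(x_\beta-x_\gamma)+\sum_{\alpha=0}^{m-2}\lambda_\alpha x_\beta^\alpha+\lambda_{m-1}e^{-x_\beta}=F(x_\beta)$ ($\beta=0,\dots,N$), $\sum_\gamma\overline C_\gamma x_\gamma^\alpha=0$ ($\alpha=0,\dots,m-2$), $\sum_\gamma\overline C_\gamma e^{-x_\gamma}=0$, which arises in minimizing the norm of the error functional of the quadrature formula $\int_0^1\varphi\,dx\cong\sum_\beta C_\beta\varphi(x_\beta)$ in the space $W_2^{(m,m-1)}(0,1)$ with norm $\left(\int_0^1(\varphi^{(m)}+\varphi^{(m-1)})^2dx\right)^{1/2}$. *)

(* Defs.v *)
From HB Require Import structures.
From mathcomp Require Import all_boot all_order all_algebra.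
From mathcomp Require Import reals.
From mathcomp Require Import sequences exp.
Set Implicit Arguments. Unset Strict Implicit. Unset Printing Implicit Defensive.
Import Order.TTheory GRing.Theory Num.Theory.
Local Open Scope ring_scope.

Definition Gker (R : realType) (m : nat) (x : R) : R :=
  Num.sg x / 2 *
  ((expR x - expR (- x)) / 2
   - \sum_(1 <= k < m) x ^+ (2 * k - 1) / ((2 * k - 1)`!)%:R).

Definition Gmat (R : realType) (m N : nat) (x : 'I_N.+1 -> R) : 'M[R]_N.+1 :=
  \matrix_(b, g) Gker m (x b - x g).

Definition Smat (R : realType) (m N : nat) (x : 'I_N.+1 -> R) : 'M[R]_(m, N.+1) :=
  \matrix_(i < m, j < N.+1) if (i < m.-1)%N then x j ^+ i else expR (- x j).

Definition Qmat (R : realType) (m N : nat) (x : 'I_N.+1 -> R) : 'M[R]_(N.+1 + m) :=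
  block_mx (Gmat m x) (Smat m x)^T (Smat m x) 0.

(* Main.v *)
Require Import Defs.
From HB Require Import structures.
From mathcomp Require Import all_boot all_order all_algebra.
From mathcomp Require Import reals classical_sets boolp.
From mathcomp Require Import topology normedtype sequences derive realfun exp.
From mathcomp Require Import zify ring lra.
Set Implicit Arguments. Unset Strict Implicit. Unset Printing Implicit Defensive.
Import Order.TTheory GRing.Theory Num.Theory.
Import numFieldNormedType.Exports.
Local Open Scope ring_scope.

Section Calc.
Variable R : realType.
Implicit Types (f g : R -> R) (y d e : R).

Lemma isd_ext f g y d : (forall t, f t = g t) -> is_derive y 1 f d -> is_derive y 1 g d.
Proof. by move=> fg; have -> : f = g by apply/funext. Qed.

Lemma isd_eq f y d d' : is_derive y 1 f d -> d = d' -> is_derive y 1 f d'.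
Proof. by move=> ? <-. Qed.

Lemma isd_cst c y : is_derive y 1 (fun _ : R => c) (0:R).
Proof. exact: is_derive_cst. Qed.

Lemma isd_id y : is_derive y 1 (fun t : R => t) 1.
Proof. exact: is_derive_id. Qed.

Lemma isdD f g y df dg : is_derive y 1 f df -> is_derive y 1 g dg ->
  is_derive y 1 (fun t => f t + g t) (df + dg).
Proof. by move=> hf hg; exact: is_deriveD. Qed.

Lemma isdN f y df : is_derive y 1 f df -> is_derive y 1 (fun t => - f t) (- df).
Proof. by move=> hf; exact: is_deriveN. Qed.

Lemma isdB f g y df dg : is_derive y 1 f df -> is_derive y 1 g dg ->
  is_derive y 1 (fun t => f t - g t) (df - dg).
Proof. by move=> hf hg; apply: isdD => //; apply: isdN. Qed.

Lemma isdM f g y df dg : is_derive y 1 f df -> is_derive y 1 g dg ->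
  is_derive y 1 (fun t => f t * g t) (f y * dg + g y * df).
Proof. by move=> hf hg; exact: is_deriveM. Qed.

Lemma isdZ c f y df : is_derive y 1 f df -> is_derive y 1 (fun t => c * f t) (c * df).
Proof.
move=> hf; have h := isdM (isd_cst c y) hf.
by apply: isd_eq h _; rewrite mulr0 addr0.
Qed.

Lemma isdMr c f y df : is_derive y 1 f df -> is_derive y 1 (fun t => f t * c) (df * c).
Proof.
move=> hf; apply: isd_ext (fun t => mulrC _ _) _.
by rewrite mulrC; apply: isdZ.
Qed.

Lemma isd_sum n (h : 'I_n -> R -> R) (dh : 'I_n -> R) y :
  (forall i, is_derive y 1 (h i) (dh i)) ->
  is_derive y 1 (fun t => \sum_(i < n) h i t) (\sum_(i < n) dh i).
Proof.
elim: n h dh => [|n IH] h dh hd.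
  rewrite big_ord0; apply: isd_ext (isd_cst 0 y) => t; by rewrite big_ord0.
have h2 := isdD (IH (fun i => h (widen_ord (leqnSn n) i)) (fun i => dh (widen_ord (leqnSn n) i)) (fun i => hd _)) (hd ord_max).
rewrite big_ord_recr; apply: isd_ext h2 => t; by rewrite big_ord_recr.
Qed.

Lemma isd_derivable f y d : is_derive y 1 f d -> derivable f y 1.
Proof. by case. Qed.

Lemma isd_derive1 f y d : is_derive y 1 f d -> derive1 f y = d.
Proof. by move=> hf; rewrite derive1E; case: hf. Qed.

Lemma isd_lin f a c y d : is_derive (a * y + c) 1 f d ->
  is_derive y 1 (fun t => f (a * t + c)) (a * d).
Proof.
move=> fd.
have h1 : is_derive y 1 (fun t : R => a * t + c) a.
  have h := isdD (isdZ a (isd_id y)) (isd_cst c y).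
  by apply: isd_eq h _; rewrite mulr1 addr0.
have D : derivable (f \o (fun t => a * t + c)) y 1.
  apply/derivable1_diffP; apply: differentiable_comp; apply/derivable1_diffP.
    exact: isd_derivable h1.
  exact: isd_derivable fd.
apply: DeriveDef; first exact: D.
rewrite -derive1E derive1_comp; last exact: isd_derivable fd.
  by rewrite (isd_derive1 fd) (isd_derive1 h1) mulrC.
exact: isd_derivable h1.
Qed.

Lemma isd_expR y : is_derive y 1 (fun t : R => expR t) (expR y).
Proof. exact: is_derive_expR. Qed.

Lemma isd_expRN y : is_derive y 1 (fun t : R => expR (- t)) (- expR (- y)).
Proof.
have := @isd_lin expR (-1) 0 y (expR (-1 * y + 0)) (isd_expR _).
rewrite mulN1r addr0 mulN1r.
by apply: isd_ext => t; rewrite mulN1r addr0.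
Qed.

Lemma isd_poly (p : {poly R}) y : is_derive y 1 (fun t => p.[t]) (p^`().[y]).
Proof. exact: is_derive_poly. Qed.

Lemma isd_shift f c y d : is_derive (y - c) 1 f d ->
  is_derive y 1 (fun t => f (t - c)) d.
Proof.
move=> hf; have h := @isd_lin f 1 (- c) y d.
have e : 1 * y + - c = y - c by rewrite mul1r.
rewrite e in h.
by apply: (isd_ext _ (isd_eq (h hf) (mul1r d))) => t; rewrite mul1r.
Qed.

Lemma mono_ge0 f (f' : R -> R) (a b : R) :
  (forall t : R, is_derive t 1 f (f' t)) -> (forall t, a < t < b -> 0 <= f' t) ->
  a <= b -> f a <= f b.
Proof.
move=> hd hp ab.
have d1 : forall t, t \in `]a, b[%R -> derivable f t 1.
  by move=> t _; exact: isd_derivable (hd t).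
have d2 : forall t, t \in `]a, b[%R -> 0 <= f^`()%classic t.
  by move=> t; rewrite in_itv /= => ht; rewrite (isd_derive1 (hd t)); apply: hp.
have d3 : {within `[a, b], continuous f}%classic.
  by apply: derivable_within_continuous => t _; exact: isd_derivable (hd t).
exact: (ger0_derive1_ndecr d1 d2 d3 (lexx a) ab (lexx b)).
Qed.

Lemma mono_gt0 f (f' : R -> R) (a b : R) :
  (forall t : R, is_derive t 1 f (f' t)) -> (forall t, a < t < b -> 0 < f' t) ->
  a < b -> f a < f b.
Proof.
move=> hd hp ab.
have d1 : forall t, t \in `]a, b[%R -> derivable f t 1.
  by move=> t _; exact: isd_derivable (hd t).
have d2 : forall t, t \in `]a, b[%R -> 0 < f^`()%classic t.
  by move=> t; rewrite in_itv /= => ht; rewrite (isd_derive1 (hd t)); apply: hp.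
have d3 : {within `[a, b], continuous f}%classic.
  by apply: derivable_within_continuous => t _; exact: isd_derivable (hd t).
exact: (gtr0_derive1_incr d1 d2 d3 (lexx a) ab (lexx b)).
Qed.

Lemma isd_conv f g y df d : is_derive y 1 f df -> (forall t, f t = g t) -> df = d ->
  is_derive y 1 g d.
Proof. by move=> h fg <-; exact: isd_ext fg h. Qed.

End Calc.

Section Poly.
Variable R : realType.
Variable m : nat.
Hypothesis hm : (2 <= m)%N.

Definition pp : {poly R} :=
  \poly_(i < (2 * m - 2)%N) (if odd i then (i`!%:R)^-1 else 0).

Lemma size_pp : (size pp <= 2 * m - 2)%N.
Proof. exact: size_poly. Qed.

Definition gg (i : nat) (s : R) : R :=
  (expR s - (-1) ^+ i * expR (- s)) / 2 - (pp^`(i)).[s].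

Lemma pp_derivn0 i : (2 * m - 2 <= i)%N -> pp^`(i) = 0.
Proof. move=> hi; apply: derivn_poly0; exact: leq_trans size_pp hi. Qed.

Lemma gg0 i : gg i 0 = if (odd i && (2 * m - 2 <= i)%N) then 1 else 0.
Proof.
rewrite /gg expR0 oppr0 expR0 mulr1 horner_coef0 coef_derivn addn0 ffactnn.
rewrite /pp coef_poly.
have hf : (i`!%:R : R) != 0 by rewrite pnatr_eq0 -lt0n fact_gt0.
case: (boolP (odd i)) => oi /=.
- rewrite -signr_odd oi expr1 opprK.
  case: ltnP => hi /=.
  + by rewrite -[_ *+ i`!]mulr_natr mulVf //; field.
  + by rewrite mul0rn; field.
- rewrite -signr_odd (negbTE oi) expr0 subrr mul0r if_same mul0rn.
  by rewrite subr0.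
Qed.

Lemma gg0_low i : (i <= 2 * m - 2)%N -> gg i 0 = 0.
Proof.
move=> hi; rewrite gg0; case: (boolP (odd i)) => //= oi.
case: leqP => // hi2.
have ei : i = (2 * m - 2)%N by apply/eqP; rewrite eqn_leq hi.
move: oi; rewrite ei.
have -> : (2 * m - 2 = (m - 1).*2)%N by rewrite -mul2n; lia.
by rewrite odd_double.
Qed.

Lemma gg0_top : gg (2 * m - 1) 0 = 1.
Proof.
rewrite gg0 leq_sub2l //=.
have -> : (2 * m - 1 = (m - 1).*2.+1)%N by rewrite -mul2n; lia.
by rewrite /= odd_double.
Qed.

Definition HH (i : nat) (z : R) := gg i.+1 z + gg i z.

Lemma HHE i z : HH i z = expR z - (pp^`(i.+1) + pp^`(i)).[z].
Proof.
by rewrite /HH /gg hornerD exprS; field.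
Qed.

Lemma size_HHpoly i : (m.-1 <= i)%N -> (size (pp^`(i.+1) + pp^`(i))%R <= m.-1)%N.
Proof.
move=> hi; apply/leq_sizeP => j hj.
rewrite coefD !coef_derivn /pp !coef_poly.
have -> : (i.+1 + j < 2 * m - 2)%N = false by apply/negbTE; rewrite -leqNgt; lia.
have -> : (i + j < 2 * m - 2)%N = false by apply/negbTE; rewrite -leqNgt; lia.
by rewrite !mul0rn addr0.
Qed.

Lemma gg_high i z : (2 * m - 2 <= i)%N -> gg i z = (expR z - (-1) ^+ i * expR (- z)) / 2.
Proof. by move=> hi; rewrite /gg pp_derivn0 // horner0 subr0. Qed.

Lemma HH_top z : HH (2 * m - 2) z = expR z.
Proof.
rewrite /HH !gg_high ?leqnSn //.
by rewrite exprS; field.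
Qed.

Lemma gg_period z : gg (2 * m) z = gg (2 * m - 2) z.
Proof.
have e : (2 * m = (2 * m - 2).+2)%N by lia.
rewrite [in LHS]e !gg_high ?leqnn //; last by apply: leq_trans (leqnSn _) (leqnSn _).
by rewrite !exprS !mulN1r opprK.
Qed.

Lemma sum_odd (f : nat -> R) n :
  \sum_(i < (2 * n)%N) (if odd i then f i else 0) = \sum_(k < n) f (2 * k + 1)%N.
Proof.
elim: n => [|n IH]; first by rewrite muln0 !big_ord0.
have -> : (2 * n.+1 = (2 * n).+2)%N by lia.
by rewrite !big_ord_recr /= IH oddM /= addr0 addn1.
Qed.

Lemma pp_hornerE s : pp.[s] = \sum_(1 <= k < m) s ^+ (2 * k - 1) / ((2 * k - 1)`!)%:R.
Proof.
rewrite /pp horner_poly.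
have -> : (2 * m - 2 = 2 * (m - 1))%N by lia.
rewrite (eq_bigr (fun i : 'I_(2 * (m-1)) => if odd i then (i`!%:R)^-1 * s ^+ i else 0)); last first.
  by move=> i _; case: ifP => _; rewrite ?mul0r.
rewrite (sum_odd (fun i => (i`!%:R)^-1 * s ^+ i)).
have -> : m = (m - 1).+1 by lia.
rewrite big_add1 /= big_mkord subn1 /=; apply: eq_bigr => k _.
have -> : (2 * k.+1 - 1 = 2 * k + 1)%N by lia.
by rewrite mulrC.
Qed.

Lemma Gker_gg s : Gker m s = Num.sg s / 2 * gg 0 s.
Proof. by rewrite /Gker /gg expr0 mul1r derivn0 pp_hornerE. Qed.

End Poly.

Arguments pp {R} m.
Arguments gg {R} m i s.
Arguments HH {R} m i z.

Section Ann.
Variable R : realType.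
Variable m : nat.
Hypothesis hm : (2 <= m)%N.
Variable N : nat.
Variable x : 'I_N.+1 -> R.
Variable C : 'I_N.+1 -> R.
Hypothesis hpoly : forall k, (k < m.-1)%N -> \sum_j C j * x j ^+ k = 0.
Hypothesis hexp : \sum_j C j * expR (- x j) = 0.
Implicit Types (s t y z : R).

Lemma gg0L i : (i <= 2 * m - 2)%N -> gg m i (0:R) = 0.
Proof. exact: (@gg0_low R m hm i). Qed.
Lemma gg0T : gg m (2 * m - 1) (0:R) = 1.
Proof. exact: (@gg0_top R m hm). Qed.
Lemma sizeHH i : (m.-1 <= i)%N -> (size ((@pp R m)^`(i.+1) + (@pp R m)^`(i))%R <= m.-1)%N.
Proof. by move=> hi; apply: (@size_HHpoly R). Qed.

Lemma ann_poly (q : {poly R}) y : (size q <= m.-1)%N ->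
  \sum_j C j * q.[y - x j] = 0.
Proof.
move=> hq.
set r := q \Po (y%:P - 'X).
have hr : (size r <= m.-1)%N.
  apply: leq_trans (size_comp_poly_leq _ _) _.
  have -> : size (y%:P - 'X : {poly R}) = 2%N.
    by rewrite addrC size_addl ?size_polyC ?size_opp ?size_polyX //; case: (y == 0).
  rewrite muln1; case: (size q) hq => [|n] hn /=; lia.
rewrite (eq_bigr (fun j => C j * r.[x j])); last first.
  by move=> j _; rewrite horner_comp !hornerE.
rewrite (eq_bigr (fun j => \sum_(k < size r) r`_k * (C j * x j ^+ k))); last first.
  by move=> j _; rewrite horner_coef mulr_sumr; apply: eq_bigr => k _; ring.
rewrite exchange_big /= big1 // => k _.
rewrite -mulr_sumr hpoly ?mulr0 //.
by apply: leq_trans hr.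
Qed.

Lemma ann_exp y : \sum_j C j * expR (y - x j) = 0.
Proof.
rewrite (eq_bigr (fun j => expR y * (C j * expR (- x j)))).
  by rewrite -mulr_sumr hexp mulr0.
by move=> j _; rewrite expRD; ring.
Qed.

Lemma ann_HH i y : (m.-1 <= i)%N -> \sum_j C j * HH m i (y - x j) = 0.
Proof.
move=> hi.
rewrite (eq_bigr (fun j => C j * expR (y - x j) - C j * ((pp m)^`(i.+1) + (pp m)^`(i)).[y - x j])); last first.
  by move=> j _; rewrite HHE mulrBr.
by rewrite sumrB ann_exp ann_poly ?subr0 // sizeHH.
Qed.


Lemma isd_gg i s : is_derive s 1 (gg m i) (gg m i.+1 s).
Proof.
have h := isdB (isdMr (2^-1) (isdB (isd_expR s) (isdZ ((-1) ^+ i) (isd_expRN s))))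
                (isd_poly ((pp m)^`(i)) s).
apply: (isd_conv h) => [t|]; first by rewrite /gg.
by rewrite /gg derivnS exprS; ring.
Qed.

Lemma isd_gg_shift i (c : R) t : is_derive t 1 (fun y => gg m i (y - c)) (gg m i.+1 (t - c)).
Proof. exact: isd_shift (isd_gg i (t - c)). Qed.

Lemma isd_HH_shift i (c : R) t : is_derive t 1 (fun y => HH m i (y - c)) (HH m i.+1 (t - c)).
Proof.
have h := isdD (isd_gg_shift i.+1 c t) (isd_gg_shift i c t).
by apply: (isd_conv h) => [y|]; rewrite /HH.
Qed.

Definition EE (j : nat) (xb y : R) :=
  (-1) ^+ (m.-1 + j) * HH m (m.-1 + j) (y - xb).

Lemma isd_EE j (xb : R) t : is_derive t 1 (fun y => EE j xb y) (- EE j.+1 xb t).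
Proof.
have h := isdZ ((-1) ^+ (m.-1 + j)) (isd_HH_shift (m.-1 + j) xb t).
apply: (isd_conv h) => [y|]; first by rewrite /EE.
by rewrite /EE addnS exprS; ring.
Qed.

Lemma EE_diag_low j (xb : R) : (j < m.-1)%N -> EE j xb xb = 0.
Proof.
move=> hj; rewrite /EE subrr /HH !gg0L ?addr0 ?mulr0 //; lia.
Qed.

Lemma EE_diag_top (xb : R) : EE m.-1 xb xb = 1.
Proof.
rewrite /EE subrr /HH.
have -> : (m.-1 + m.-1 = 2 * m - 2)%N by lia.
have -> : ((2 * m - 2).+1 = 2 * m - 1)%N by lia.
rewrite gg0T (gg0L (leqnn _)) addr0 mulr1.
have -> : (2 * m - 2 = (m - 1).*2)%N by rewrite -mul2n; lia.
by rewrite -signr_odd odd_double expr0.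
Qed.

Lemma EE_m (xb : R) y : EE m xb y + EE m.-1 xb y = 0.
Proof.
rewrite /EE /HH.
have -> : (m.-1 + m = (2 * m - 2).+1)%N by lia.
have -> : ((2 * m - 2).+2 = 2 * m)%N by lia.
have -> : (m.-1 + m.-1 = 2 * m - 2)%N by lia.
rewrite gg_period // exprS; ring.
Qed.

Lemma ann_EE j y : \sum_b C b * EE j (x b) y = 0.
Proof.
rewrite (eq_bigr (fun b => (-1) ^+ (m.-1 + j) * (C b * HH m (m.-1 + j) (y - x b)))).
  by rewrite -mulr_sumr ann_HH ?mulr0 ?leq_addr.
by move=> b _; rewrite /EE; ring.
Qed.



Definition ut (A : pred 'I_N.+1) (k : nat) (y : R) : R :=
  \sum_g C g * ((if A g then -1 else 1) / 2 * gg m k (y - x g)).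

Lemma isd_ut A k t : is_derive t 1 (ut A k) (ut A k.+1 t).
Proof.
apply: isd_ext; last first.
  apply: isd_sum => g; apply: isdZ; apply: isdZ; exact: isd_gg_shift.
by move=> y; rewrite /ut.
Qed.

Definition BB (U : nat -> R -> R) (xb y : R) : R :=
  \sum_(j < m) EE j xb y * U (m - j.+1)%N y
  + \sum_(j < m.-1) EE j xb y * U (m.-1 - j.+1)%N y.

Lemma isd_Bpart n (U : nat -> R -> R) xb t :
  (forall k s, is_derive s 1 (U k) (U k.+1 s)) ->
  is_derive t 1 (fun y => \sum_(j < n) EE j xb y * U (n - j.+1)%N y)
    (EE 0 xb t * U n t - EE n xb t * U 0%N t).
Proof.
move=> hU.
have h := isd_sum (fun j : 'I_n => isdM (isd_EE j xb t) (hU (n - j.+1)%N t)).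
apply: (isd_conv h) => [y //|].
pose F k := EE k xb t * U (n - k)%N t.
have -> : EE 0 xb t * U n t - EE n xb t * U 0%N t = - (F n - F 0%N).
  by rewrite /F subn0 subnn; ring.
have ht : \sum_(0 <= k < n) (- (EE k xb t * U (n - k.+1)%N.+1 t + U (n - k.+1)%N t * - EE k.+1 xb t)) = F n - F 0%N.
  apply: telescope_sumr_eq => // k /andP [_ hk]; rewrite /F.
  have -> : ((n - k.+1).+1 = n - k)%N by lia.
  ring.
rewrite -ht big_mkord -sumrN; apply: eq_bigr => j _; rewrite opprK.
by [].
Qed.

Lemma isd_BB (U : nat -> R -> R) xb t :
  (forall k s, is_derive s 1 (U k) (U k.+1 s)) ->
  is_derive t 1 (BB U xb) (EE 0 xb t * (U m t + U m.-1 t)).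
Proof.
move=> hU.
have h := isdD (isd_Bpart m xb t hU) (isd_Bpart m.-1 xb t hU).
apply: (isd_conv h) => [y|]; first by rewrite /BB.
have hE : EE m xb t = - EE m.-1 xb t by apply/eqP; rewrite -addr_eq0 EE_m.
by rewrite hE; ring.
Qed.


Definition uu (k : nat) (y : R) : R :=
  \sum_g C g * (Num.sg (y - x g) / 2 * gg m k (y - x g)).

Definition Phi (y : R) : R :=
  \sum_b C b * (if y <= x b then BB uu (x b) y else uu 0 (x b)).

Definition PhiT (A : pred 'I_N.+1) (y : R) : R :=
  \sum_b C b * (if A b then BB (ut A) (x b) y else uu 0 (x b)).

Definition psi (A : pred 'I_N.+1) (t : R) : R :=
  \sum_b (if A b then C b * HH m m.-1 (t - x b) else 0).

Lemma HH_pred z : HH m m.-1 z = gg m m z + gg m m.-1 z.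
Proof. by rewrite /HH prednK //; lia. Qed.

Lemma ut_L A t : ut A m t + ut A m.-1 t = - psi A t.
Proof.
rewrite /ut -big_split /=.
rewrite (eq_bigr (fun g => 2^-1 * (C g * HH m m.-1 (t - x g)) - (if A g then C g * HH m m.-1 (t - x g) else 0))); last first.
  by move=> g _; rewrite HH_pred; case: (A g); field.
by rewrite sumrB -mulr_sumr ann_HH // mulr0 sub0r.
Qed.

Lemma isd_PhiT A t : is_derive t 1 (PhiT A) ((-1) ^+ m * psi A t ^+ 2).
Proof.
have hb : forall b, is_derive t 1
    (fun y => C b * (if A b then BB (ut A) (x b) y else uu 0 (x b)))
    (C b * (if A b then EE 0 (x b) t * (ut A m t + ut A m.-1 t) else 0)).
  move=> b; apply: isdZ; case: (A b); last exact: isd_cst.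
  apply: isd_BB; exact: isd_ut.
apply: isd_eq.
  apply: isd_ext (isd_sum hb).
  by move=> y; rewrite /PhiT.
rewrite ut_L.
have em : (-1) ^+ m = - (-1) ^+ m.-1 :> R.
  by rewrite -{1}(prednK (_ : (0 < m)%N)) ?exprS ?mulN1r //; lia.
transitivity (\sum_b (if A b then C b * HH m m.-1 (t - x b) else 0) * ((-1) ^+ m.-1 * - psi A t)).
  apply: eq_bigr => b _; rewrite /EE addn0; case: (A b); first by ring.
  by rewrite !mulr0 mul0r.
rewrite -mulr_suml.
have -> : \sum_b (if A b then C b * HH m m.-1 (t - x b) else 0) = psi A t by [].
rewrite em; ring.
Qed.


Lemma sg_gg_neg z k : z <= 0 -> (k <= 2 * m - 2)%N ->
  Num.sg z / 2 * gg m k z = -1 / 2 * gg m k z.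
Proof.
move=> hz hk; have [->|hz0] := eqVneq z 0; first by rewrite gg0L // !mulr0.
by rewrite ltr0_sg // lt_neqAle hz0 hz.
Qed.

Lemma sg_gg_pos z k : 0 <= z -> (k <= 2 * m - 2)%N ->
  Num.sg z / 2 * gg m k z = 1 / 2 * gg m k z.
Proof.
move=> hz hk; have [->|hz0] := eqVneq z 0; first by rewrite gg0L // !mulr0.
by rewrite gtr0_sg // lt_neqAle eq_sym hz0 hz.
Qed.

Definition nodefree (a b : R) := forall g, ~~ (a < x g < b).

Lemma uu_ut a b y k : a <= y -> y <= b -> nodefree a b -> (k <= 2 * m - 2)%N ->
  uu k y = ut (fun g => b <= x g) k y.
Proof.
move=> ay yb nf hk; rewrite /uu /ut; apply: eq_bigr => g _; congr (C g * _).
case: (leP b (x g)) => hb /=.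
  by rewrite sg_gg_neg // subr_le0 (le_trans yb hb).
rewrite sg_gg_pos // subr_ge0.
have := nf g; rewrite hb andbT -leNgt => hga.
exact: le_trans hga ay.
Qed.

Lemma BB_eq (U V : nat -> R -> R) xb y :
  (forall k, (k <= m.-1)%N -> U k y = V k y) -> BB U xb y = BB V xb y.
Proof.
move=> hUV; rewrite /BB; congr (_ + _); apply: eq_bigr => j _; rewrite hUV //; lia.
Qed.

Lemma BB_diag (U : nat -> R -> R) xb : BB U xb xb = U 0%N xb.
Proof.
have hm1 : (m.-1 < m)%N by lia.
rewrite /BB [X in X + _](bigD1 (Ordinal hm1)) //= EE_diag_top mul1r.
have -> : (m - m.-1.+1 = 0)%N by lia.
rewrite big1 ?addr0; last first.
  move=> j hj; rewrite EE_diag_low ?mul0r //.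
  have : (j : nat) != m.-1 by apply: contraNneq hj => hj'; apply/eqP/val_inj.
  have := ltn_ord j; lia.
rewrite big1 ?addr0 // => j _; rewrite EE_diag_low ?mul0r //.
Qed.

Lemma Phi_match a b y : a <= y -> y <= b -> nodefree a b ->
  Phi y = PhiT (fun g => b <= x g) y.
Proof.
move=> ay yb nf; rewrite /Phi /PhiT; apply: eq_bigr => g _; congr (C g * _).
case: (leP b (x g)) => hb /=.
  rewrite (le_trans yb hb); apply: BB_eq => k hk; apply: (uu_ut ay yb nf); lia.
have hga : x g <= a by have := nf g; rewrite hb andbT -leNgt.
case: ifP => // hy.
have -> : y = x g by apply/eqP; rewrite eq_le hy (le_trans hga ay).
by rewrite BB_diag.
Qed.

Lemma Phi_lo lo : (forall g, lo <= x g) -> Phi lo = 0.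
Proof.
move=> hlo; rewrite /Phi (eq_bigr (fun b => C b * BB uu (x b) lo)); last first.
  by move=> b _; rewrite hlo.
rewrite /BB (eq_bigr (fun b => \sum_(j < m) C b * EE j (x b) lo * uu (m - j.+1)%N lo
   + \sum_(j < m.-1) C b * EE j (x b) lo * uu (m.-1 - j.+1)%N lo)); last first.
  by move=> b _; rewrite mulrDr !mulr_sumr; congr (_ + _); apply: eq_bigr => j _; rewrite mulrA.
rewrite big_split /= [X in X + _]exchange_big [X in _ + X]exchange_big /=.
rewrite !big1 ?addr0 // => j _; rewrite -mulr_suml ann_EE mul0r //.
Qed.

Lemma Phi_hi hi : (forall g, x g <= hi) -> Phi hi = \sum_b C b * uu 0 (x b).
Proof.
move=> hhi; rewrite /Phi; apply: eq_bigr => b _; case: ifP => // h.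
have -> : hi = x b by apply/eqP; rewrite eq_le h hhi.
by rewrite BB_diag.
Qed.


Lemma sgn_sq : (-1) ^+ m * (-1) ^+ m = 1 :> R.
Proof. by rewrite -exprMn mulrNN mulr1 expr1n. Qed.

Lemma isd_sPhiT A t :
  is_derive t 1 (fun y => (-1) ^+ m * PhiT A y) (psi A t ^+ 2).
Proof.
apply: isd_eq; first by apply: isdZ; exact: isd_PhiT.
by rewrite mulrA sgn_sq mul1r.
Qed.

Lemma mono_free a b : a <= b -> nodefree a b ->
  (-1) ^+ m * Phi a <= (-1) ^+ m * Phi b.
Proof.
move=> ab nf.
rewrite (Phi_match (lexx a) ab nf) (Phi_match ab (lexx b) nf).
apply: (mono_ge0 (fun t => isd_sPhiT _ t)) => // t _.
exact: sqr_ge0.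
Qed.

Lemma strict_free a b : a < b -> nodefree a b ->
  (forall t, a < t < b -> psi (fun g => b <= x g) t != 0) ->
  (-1) ^+ m * Phi a < (-1) ^+ m * Phi b.
Proof.
move=> ab nf hpsi.
rewrite (Phi_match (lexx a) (ltW ab) nf) (Phi_match (ltW ab) (lexx b) nf).
apply: (mono_gt0 (fun t => isd_sPhiT _ t)) => // t ht.
by rewrite lt_def sqr_ge0 andbT sqrf_eq0 hpsi.
Qed.

Lemma mono_all a b : a <= b -> (-1) ^+ m * Phi a <= (-1) ^+ m * Phi b.
Proof.
suff H : forall (n : nat) (a b : R), (#|[pred g : 'I_N.+1 | (a < x g < b)%R]| <= n)%N -> a <= b ->
    (-1) ^+ m * Phi a <= (-1) ^+ m * Phi b by exact: H.
elim=> [|n IH] a' b' hc ab.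
  apply: mono_free => // g; apply/negP => hg.
  have : (0 < #|[pred g : 'I_N.+1 | (a' < x g < b')%R]|)%N by apply/card_gt0P; exists g.
  by rewrite leqn0 in hc; rewrite (eqP hc).
case: (boolP [exists g, a' < x g < b']) => [/existsP [g /andP [h1 h2]]|hne].
  have hA : forall c d : R, a' <= c -> d <= b' -> (c == a') || (d == b') ->
      ~~ (c < x g < d) -> (#|[pred g' : 'I_N.+1 | (c < x g' < d)%R]| <= n)%N.
    move=> c d hc1 hd1 _ hgn.
    have : [pred g' : 'I_N.+1 | (c < x g' < d)%R] \proper [pred g' : 'I_N.+1 | (a' < x g' < b')%R].
      apply/properP; split.
        apply/fintype.subsetP => g'; rewrite !inE => /andP [q1 q2].
        by rewrite (le_lt_trans hc1 q1) (lt_le_trans q2 hd1).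
      by exists g; rewrite !inE ?h1 ?h2.
    move=> /proper_card h; rewrite -ltnS; exact: leq_trans h hc.
  apply: le_trans (IH a' (x g) _ (ltW h1)) (IH (x g) b' _ (ltW h2)).
    by apply: hA => //; [exact: ltW|rewrite eqxx|rewrite ltxx andbF].
  by apply: hA => //; [exact: ltW|rewrite eqxx orbT|rewrite ltxx].
apply: mono_free => // g; apply/negP => hg; move/negP: hne; apply.
by apply/existsP; exists g.
Qed.


Lemma isd_HH i t : is_derive t 1 (HH m i) (HH m i.+1 t).
Proof.
have := isd_HH_shift i 0 t; rewrite subr0.
by apply: isd_ext => y; rewrite subr0.
Qed.

Lemma HH_sign n z : (n <= m.-1)%N -> z < 0 -> 0 < (-1) ^+ n * HH m (2 * m - 2 - n) z.
Proof.
elim: n z => [|n IH] z hn hz.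
  by rewrite expr0 mul1r subn0 HH_top expR_gt0.
set k := (2 * m - 2 - n.+1)%N.
have hk : (k.+1 = 2 * m - 2 - n)%N by rewrite /k; lia.
have hd : forall t, is_derive t 1 (fun y => - ((-1) ^+ n.+1 * HH m k y))
    ((-1) ^+ n * HH m (2 * m - 2 - n) t).
  move=> t; have h := isdN (isdZ ((-1) ^+ n.+1) (isd_HH k t)).
  apply: (isd_conv h) => [y //|].
  by rewrite hk exprS; ring.
have := mono_gt0 hd (_ : forall t, z < t < 0 -> _) hz.
have -> : HH m k (0:R) = 0 by rewrite /HH !gg0L ?addr0 // /k; lia.
rewrite mulr0 oppr0 oppr_lt0; apply.
move=> t /andP [_ ht]; apply: IH => //; lia.
Qed.

Lemma HH_neq0 z : z < 0 -> HH m m.-1 z != 0.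
Proof.
move=> hz; have := HH_sign (leqnn m.-1) hz.
have -> : (2 * m - 2 - m.-1 = m.-1)%N by lia.
by apply: contraTneq => ->; rewrite mulr0 ltxx.
Qed.


Lemma q_pos : (forall g, 0 <= x g <= 1) -> injective x -> (exists g, C g != 0) ->
  0 < (-1) ^+ m * \sum_b C b * uu 0 (x b).
Proof.
move=> h01 xinj [g0 hg0].
case: (@arg_maxP _ _ _ g0 (fun g => C g != 0) x hg0) => bs hbs hmax.
set xs := x bs.
have hmax' : forall g, xs < x g -> C g = 0.
  move=> g hg; apply/eqP; apply: contraTT hg => hC; rewrite -leNgt; exact: hmax.
set δ := \big[Order.min/1]_(g | g != bs) `|x g - xs|.
have hδ : 0 < δ.
  rewrite /δ; apply: (big_ind (fun v => 0 < v)) => //.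
    by move=> u v hu hv; rewrite lt_min hu hv.
  move=> g hg; rewrite normr_gt0 subr_eq0; apply: contra hg => /eqP h.
  by apply/eqP; apply: xinj.
have hδle : forall g, g != bs -> δ <= `|x g - xs| by move=> g hg; exact: bigmin_le_cond.
have nf : nodefree (xs - δ) xs.
  move=> g; apply/negP => /andP [h1 h2].
  have hg : g != bs by apply: contraTneq h2 => ->; rewrite ltxx.
  have := hδle g hg; rewrite ler0_norm ?subr_le0 ?(ltW h2) //.
  by apply/negP; rewrite -ltNge; move: h1; rewrite ltrBlDr addrC -ltrBlDr opprB.
have hpsi : forall t, xs - δ < t < xs -> psi (fun g => xs <= x g) t != 0.
  move=> t /andP [_ ht].
  rewrite /psi (bigD1 bs) //= lexx big1 ?addr0.
    rewrite mulf_neq0 // HH_neq0 // subr_lt0 //.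
  move=> g hg; case: ifP => // hxg.
  rewrite hmax' ?mul0r // lt_neqAle hxg andbT.
  by apply: contra hg => /eqP h; apply/eqP; apply: xinj.
have hxs := h01 bs; move/andP: hxs => [hxs0 hxs1].
have hx0 : 0 <= xs by []. have hx1 : xs <= 1 by [].
have e1 : (-1) ^+ m * Phi (- δ) <= (-1) ^+ m * Phi (xs - δ).
  by apply: mono_all; lra.
have e2 : (-1) ^+ m * Phi (xs - δ) < (-1) ^+ m * Phi xs.
  by apply: strict_free => //; lra.
have e3 : (-1) ^+ m * Phi xs <= (-1) ^+ m * Phi 1 by exact: mono_all.
rewrite -(Phi_hi (hi := 1)); last by move=> g; case/andP: (h01 g).
rewrite -[0](mulr0 ((-1) ^+ m)) -(Phi_lo (lo := - δ)); last first.
  move=> g; case/andP: (h01 g) => hg _; apply: le_trans hg.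
  by rewrite oppr_le0 ltW.
exact: le_lt_trans e1 (lt_le_trans e2 e3).
Qed.


End Ann.

Lemma core (R : realType) (m N : nat) (x : 'I_N.+1 -> R) (T : 'M[R]_(N.+1, m)) :
  (2 <= m)%N -> injective x -> (forall j, 0 <= x j <= 1) ->
  Smat m x *m T = 1%:M ->
  forall w : 'cV[R]_(N.+1 + m), Qmat m x *m w = 0 -> w = 0.
Proof.
move=> hm xinj h01 hT w.
rewrite -[w]vsubmxK; set wC := usubmx w; set wL := dsubmx w.
rewrite /Qmat mul_block_col mul0mx addr0 => /eqP; rewrite col_mx_eq0 => /andP [/eqP h1 /eqP h2].
pose C := fun j : 'I_N.+1 => (wC j 0 : R).
have hpoly : forall k, (k < m.-1)%N -> \sum_j C j * x j ^+ k = 0.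
  move=> k hk; have hk' : (k < m)%N by lia.
  transitivity ((Smat m x *m wC) (Ordinal hk') 0); last by rewrite h2 mxE.
  by rewrite mxE; apply: eq_bigr => j _; rewrite /Smat mxE /= hk mulrC.
have hexp : \sum_j C j * expR (- x j) = 0.
  have hk' : (m.-1 < m)%N by lia.
  transitivity ((Smat m x *m wC) (Ordinal hk') 0); last by rewrite h2 mxE.
  by rewrite mxE; apply: eq_bigr => j _; rewrite /Smat mxE /= ltnn mulrC.
have hq : \sum_b C b * uu m x C 0 (x b) = 0.
  have hG : Gmat m x *m wC = - ((Smat m x)^T *m wL).
    by apply/eqP; rewrite -addr_eq0 h1.
  have e : (wC^T *m (Gmat m x *m wC)) 0 0 = 0.
    rewrite hG mulmxN mulmxA -trmx_mul h2 trmx0 mul0mx oppr0 mxE //.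
  transitivity ((wC^T *m (Gmat m x *m wC)) 0 0); last exact: e.
  rewrite [RHS]mxE; apply: eq_bigr => b _; rewrite /uu; congr (_ * _).
    by rewrite [RHS]mxE.
  rewrite mxE; apply: eq_bigr => g _; rewrite /Gmat mxE (Gker_gg hm) /C /=; ring.
have hC : forall g, C g = 0.
  move=> g; apply/eqP/negPn/negP => hg.
  have := q_pos hm hpoly hexp h01 xinj (ex_intro _ g hg).
  by rewrite hq mulr0 ltxx.
have wC0 : wC = 0.
  by apply/matrixP => i j; rewrite (ord1 j) [RHS]mxE; exact: (hC i).
rewrite wC0 mulmx0 add0r in h1.
have wL0 : wL = 0.
  have : T^T *m ((Smat m x)^T *m wL) = wL by rewrite mulmxA -trmx_mul hT trmx1 mul1mx.
  by rewrite h1 mulmx0 => <-.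
by rewrite wC0 wL0 col_mx0.
Qed.

Unset Implicit Arguments.

Theorem theorem3p2 (R : realType) (m N : nat) (x : 'I_N.+1 -> R) :
  (2 <= m)%N ->
  injective x ->
  (forall j, 0 <= x j <= 1) ->
  (exists T : 'M[R]_(N.+1, m), Smat m x *m T = 1%:M) ->
  Qmat m x \in unitmx.
Proof.
move=> hm xinj h01 [T hT].
rewrite -unitmx_tr -row_free_unit -kermx_eq0.
have hK := mulmx_ker (Qmat m x)^T.
apply/eqP/row_matrixP => i; rewrite row0.
have h0 : row i (kermx (Qmat m x)^T) *m (Qmat m x)^T = 0 by rewrite -row_mul hK row0.
have : Qmat m x *m (row i (kermx (Qmat m x)^T))^T = 0.
  by have := congr1 trmx h0; rewrite trmx_mul trmxK trmx0.
move/(core hm xinj h01 hT) => h.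
by apply: trmx_inj; rewrite h trmx0.
Qed.
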